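(* Let $(Z_n)_{n\ge0}$ be a Galton–Watson process with $Z_0=1$ whose offspring variable $\xi$ has mean $\mu<1$ and satisfies $\mathbf{E}[\xi^{1+\epsilon}]<\infty$ for some $\epsilon>0$. Suppose $1<\beta<\mu^{-1}$. Then there exists $\kappa>0$ such that for all $\delta\in(0,\kappa)$ the process $((Z_n\beta^n)^{1+\delta})_{n\ge0}$ is a supermartingale with respect to the natural filtration $\mathcal{F}_n=\sigma(Z_k;k\le n)$. *)

(* Defs.v *)
From HB Require Import structures.
From mathcomp Require Import all_boot all_order all_algebra.
From mathcomp Require Import all_classical all_reals all_analysis.
Set Implicit Arguments. Unset Strict Implicit. Unset Printing Implicit Defensive.
Import Order.TTheory GRing.Theory Num.Theory.
Local Open Scope classical_set_scope.
Local Open Scope ring_scope.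

Section GW.
Context (d : measure_display) (T : measurableType d) (R : realType)
        (P : probability T R).

(* Mutual independence of a family of nat-valued random variables indexed
   by I : the product rule holds for every finite (duplicate-free)
   subfamily and every choice of (measurable = arbitrary) sets of values. *)
Definition mutually_independent (I : eqType) (X : I -> T -> nat) : Prop :=
  forall (s : seq I) (B : I -> set nat), uniq s ->
    (P (\big[setI/setT]_(j <- s) (X j @^-1` B j)) =
     \prod_(j <- s) P (X j @^-1` B j))%E.

(* The offspring variables xi n i (n-th generation, i-th individual) are
   i.i.d. copies of the offspring variable xi0. *)
Definition iid_offspring (xi0 : T -> nat) (xi : nat -> nat -> T -> nat) : Prop :=
  measurable_fun setT xi0 /\
  (forall n i, measurable_fun setT (xi n i)) /\
  mutually_independent (fun j : nat * nat => xi j.1 j.2) /\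
  (forall n i (B : set nat), P (xi n i @^-1` B) = P (xi0 @^-1` B)).

Definition GW_process (xi : nat -> nat -> T -> nat) (Z : nat -> T -> nat) : Prop :=
  (forall t, Z 0%N t = 1%N) /\
  (forall n t, Z n.+1 t = (\sum_(i < Z n t) xi n i t)%N).

Definition natural_filtration (Z : nat -> T -> nat) (n : nat) : set (set T) :=
  <<s [set A | exists k, (k <= n)%N /\ exists B : set nat, A = Z k @^-1` B] >>.

(* Supermartingale with respect to a filtration F (defining property of
   E[X_{n+1} | F_n] <= X_n a.s.). *)
Definition supermartingale (F : nat -> set (set T)) (X : nat -> T -> R) : Prop :=
  (forall n (B : set R), measurable B -> F n (X n @^-1` B)) /\
  (forall n, P.-integrable setT (EFin \o X n)) /\
  (forall n A, F n A ->
     (\int[P]_(x in A) (X n.+1 x)%:E <= \int[P]_(x in A) (X n x)%:E)%E).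

End GW.

(* Main.v *)
Require Import Defs.
From HB Require Import structures.
From mathcomp Require Import all_boot all_order all_algebra.
From mathcomp Require Import all_classical all_reals all_analysis.
From mathcomp Require Import measurable_realfun.
From mathcomp Require Import ring lra.
Import Order.TTheory GRing.Theory Num.Theory.
Local Open Scope classical_set_scope.
Local Open Scope ring_scope.

Set Implicit Arguments. Unset Strict Implicit. Unset Printing Implicit Defensive.

Section RealLemmas.
Context {R : realType}.

Lemma conv2_powR {p t a b : R} : 1 <= p -> 0 <= t -> t <= 1 -> 0 <= a -> 0 <= b ->
  (t * a + (1 - t) * b) `^ p <= t * a `^ p + (1 - t) * b `^ p.
Proof.
move=> p1 t0 t1 a0 b0.
have := @convex_powR R p p1 (Itv01 t0 t1) a b.
rewrite !inE /= !in_itv /= !andbT => /(_ a0 b0).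
by rewrite !convRE /=.
Qed.

Lemma powmean (p : R) (k : nat) (x : nat -> R) : 1 <= p -> (forall i, 0 <= x i) ->
  (\sum_(i < k) x i) `^ p <= k%:R `^ (p - 1) * \sum_(i < k) (x i `^ p).
Proof.
move=> p1 x0; have p0 : 0 < p by lra.
elim: k => [|k IH].
  by rewrite !big_ord0 powR0 ?gt_eqF// mulr0.
rewrite !big_ord_recr /=.
case: k IH => [|k] IH.
  by rewrite !big_ord0 !add0r powR1 mul1r.
set S := \sum_(i < k.+1) x i; set Sp := \sum_(i < k.+1) x i `^ p.
set y := x k.+1.
have S0 : 0 <= S by apply: sumr_ge0 => i _.
have y0 : 0 <= y by exact: x0.
set K : R := k.+1%:R; set N : R := k.+2%:R.
have K0 : 0 < K by rewrite /K ltr0n.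
have N0 : 0 < N by rewrite /N ltr0n.
have NK : N = K + 1 by rewrite /N /K -natr1.
set t := K / N.
have t0 : 0 <= t by rewrite /t divr_ge0 // ltW.
have t1 : t <= 1 by rewrite /t ler_pdivrMr // mul1r NK lerDl.
set u := S / K.
have u0 : 0 <= u by rewrite /u divr_ge0 // ltW.
have eS : S + y = N * (t * u + (1 - t) * y).
  rewrite /t /u NK; field; lra.
have IH' : K * u `^ p <= Sp.
  have eK : S = K * u by rewrite /u; field; lra.
  move: IH; rewrite -/S -/Sp -/K eK powRM ?(ltW K0) // -(mulr_powRB1 (ltW K0) p0).
  rewrite -mulrA mulrCA ler_pM2l ?powR_gt0 //.
rewrite eS powRM ?(ltW N0) ?addr_ge0 ?mulr_ge0 ?subr_ge0 //.
2,3: by rewrite invr_ge0 ltW.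
apply: le_trans.
  apply: ler_wpM2l; first exact: powR_ge0.
  exact: (conv2_powR p1 t0 t1 u0 y0).
rewrite -(mulr_powRB1 (ltW N0) p0) -mulrA mulrCA.
apply: ler_wpM2l; first exact: powR_ge0.
have -> : N * (t * u `^ p + (1 - t) * y `^ p) = K * u `^ p + y `^ p.
  rewrite /t NK; field; lra.
by rewrite lerD2r.
Qed.

End RealLemmas.


Section RealLemmas2.
Context {R : realType}.

Lemma split_bound (x M delta eps : R) : 0 <= x -> 0 < M -> 0 < delta -> delta < eps ->
  x `^ (1 + delta) <= M `^ delta * x + M `^ (delta - eps) * x `^ (1 + eps).
Proof.
move=> x0 M0 d0 de.
have [xM|Mx] := leP x M.
  apply: (@le_trans _ _ (M `^ delta * x)); last by rewrite lerDl mulr_ge0 ?powR_ge0.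
  rewrite addrC -(mulr_powRB1 x0); last lra.
  rewrite addrK mulrC; apply: ler_wpM2r => //.
  by apply: ge0_ler_powR; rewrite ?nnegrE //; lra.
apply: (@le_trans _ _ (M `^ (delta - eps) * x `^ (1 + eps))); last first.
  by rewrite lerDr mulr_ge0 ?powR_ge0.
have x0' : 0 < x by lra.
have -> : 1 + delta = (1 + eps) + (delta - eps) by ring.
rewrite [X in X <= _]powRD; last by apply/implyP => _; rewrite gt_eqF.
rewrite mulrC; apply: ler_wpM2r; first exact: powR_ge0.
have -> : delta - eps = - (eps - delta) by ring.
rewrite !powRN lef_pV2 ?posrE ?powR_gt0 //.
apply: ge0_ler_powR; rewrite ?nnegrE; lra.
Qed.

Lemma choose_kappa (mu C beta eps : R) : 0 <= mu -> 0 <= C -> 1 < beta ->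
  beta * mu < 1 -> 0 < eps ->
  exists M kappa, 0 < M /\ 0 < kappa /\ kappa <= eps / 2 /\
    forall delta, 0 < delta -> delta < kappa ->
      beta `^ (1 + delta) * (M `^ delta * mu + M `^ (delta - eps) * C) <= 1.
Proof.
move=> mu0 C0 b1 bm e0.
set q := beta * mu in bm *.
have q0 : 0 <= q by rewrite /q mulr_ge0 //; lra.
set K := 2 * beta ^+ 2 * (C + 1) / (1 - q).
have K1 : 1 <= K.
  rewrite /K ler_pdivlMr; last lra.
  have : 1 <= beta ^+ 2 by rewrite expr_ge1 //; lra.
  nra.
set M := K `^ (2 / eps).
have M1 : 1 <= M.
  rewrite /M -{1}(powRr0 K); apply: ler_powR => //; apply: divr_ge0; lra.
set L := beta * M.
have L1 : 1 < L by rewrite /L; nra.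
set r : R := 2 / (1 + q).
have r1 : 1 < r by rewrite /r ltr_pdivlMr; lra.
have lnr : 0 < ln r by rewrite ln_gt0.
have lnL : 0 < ln L by rewrite ln_gt0.
exists M, (Num.min (Num.min (eps / 2) 1) (ln r / ln L)).
split; first lra.
split; first by rewrite !lt_min !divr_gt0 //; lra.
split; first by rewrite !ge_min lexx.
move=> delta d0; rewrite !lt_min => /andP[/andP[de d1] dr].
have b0 : 0 < beta by lra.
rewrite powRD; last by apply/implyP => _; rewrite gt_eqF.
rewrite powRr1; last lra.
rewrite mulrDr.
have t1 : beta * beta `^ delta * (M `^ delta * mu) <= (1 + q) / 2.
  have -> : beta * beta `^ delta * (M `^ delta * mu) = L `^ delta * q.
    rewrite /L powRM; [|lra|lra]. rewrite /q; ring.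
  have Lr : L `^ delta <= r.
    rewrite -ler_ln ?posrE ?powR_gt0 //; last lra; last lra.
    rewrite ln_powR -ler_pdivlMr //; lra.
  apply: le_trans (_ : r * q <= _).
    by rewrite ler_wpM2r.
  rewrite /r -subr_ge0.
  have -> : (1 + q) / 2 - 2 / (1 + q) * q = (1 - q) ^+ 2 / (2 * (1 + q)).
    by field; lra.
  apply: divr_ge0; [exact: sqr_ge0 | lra].
have t2 : beta * beta `^ delta * (M `^ (delta - eps) * C) <= (1 - q) / 2.
  have bd : beta * beta `^ delta <= beta ^+ 2.
    rewrite expr2; apply: ler_wpM2l; [lra|].
    apply: (@le_trans _ _ (beta `^ 1)); last by rewrite powRr1 //; lra.
    by apply: ler_powR; lra.
  have Md : M `^ (delta - eps) <= K^-1.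
    apply: (@le_trans _ _ (M `^ (- (eps / 2)))).
      by apply: ler_powR => //; lra.
    rewrite /M -powRrM.
    have -> : 2 / eps * - (eps / 2) = -1 by field; lra.
    by rewrite powR_inv1 //; lra.
  apply: (@le_trans _ _ (beta ^+ 2 * (K^-1 * C))).
    apply: ler_pM; rewrite ?mulr_ge0 ?powR_ge0 //; first lra.
    by apply: ler_wpM2r.
  have b2 : 0 < beta ^+ 2 by rewrite exprn_gt0.
  rewrite /K invf_div.
  have -> : beta ^+ 2 * ((1 - q) / (2 * beta ^+ 2 * (C + 1)) * C) =
            (1 - q) / 2 * (C / (C + 1)).
    field; apply/andP; split; lra.
  apply: ler_piMr; first lra.
  by rewrite ler_pdivrMr; lra.
lra.
Qed.

End RealLemmas2.


Lemma nat_measurable (Y : set nat) : measurable Y.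
Proof. by []. Qed.

Section NatMeas.
Context d (M : measurableType d).

Definition natmeas (f : M -> nat) := forall Y : set nat, measurable (f @^-1` Y).

Lemma natmeas_cst (c : nat) : natmeas (fun _ => c).
Proof.
move=> Y; have [Yc|Yc] := pselect (Y c).
  by rewrite (_ : _ @^-1` _ = setT) //; apply/seteqP; split.
by rewrite (_ : _ @^-1` _ = set0) //; apply/seteqP; split.
Qed.

Lemma natmeas_add (f g : M -> nat) : natmeas f -> natmeas g ->
  natmeas (fun t => (f t + g t)%N).
Proof.
move=> mf mg Y.
rewrite (_ : _ @^-1` _ = \bigcup_a (f @^-1` [set a] `&` g @^-1` [set x | Y (a + x)%N])).
  by apply: bigcup_measurable => a _; apply: measurableI; [exact: mf|exact: mg].
apply/seteqP; split => [t /= Yt|t [a _ [/= -> //]]].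
by exists (f t) => //.
Qed.

Lemma natmeas_sum (f : nat -> M -> nat) (m : nat) : (forall i, natmeas (f i)) ->
  natmeas (fun t => (\sum_(i < m) f i t)%N).
Proof.
move=> mf; elim: m => [|m IH].
  by under eq_fun do rewrite big_ord0; exact: natmeas_cst.
under eq_fun do rewrite big_ord_recr /=.
exact: natmeas_add.
Qed.

Lemma natmeas_rand (N : M -> nat) (g : nat -> M -> nat) : natmeas N ->
  (forall m, natmeas (g m)) -> natmeas (fun t => g (N t) t).
Proof.
move=> mN mg Y.
rewrite (_ : _ @^-1` _ = \bigcup_m (N @^-1` [set m] `&` g m @^-1` Y)).
  by apply: bigcup_measurable => m _; apply: measurableI; [exact: mN|exact: mg].
apply/seteqP; split => [t /= Yt|t [m _ [/= -> //]]].
by exists (N t).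
Qed.

End NatMeas.

Section Decomp.
Local Open Scope ereal_scope.
Context d (T : measurableType d) (R : realType) (mu : {measure set T -> \bar R}).

Lemma integral_natdecomp (A : set T) (W : T -> nat) (f : T -> \bar R) :
  measurable A -> natmeas W -> measurable_fun A f -> (forall x, A x -> 0 <= f x) ->
  \int[mu]_(x in A) f x = \sum_(k <oo) \int[mu]_(x in A `&` W @^-1` [set k]) f x.
Proof.
move=> mA mW mf f0.
have eA : A = \bigcup_k (A `&` W @^-1` [set k]).
  apply/seteqP; split => [t At|t [k _ []//]].
  by exists (W t).
rewrite {1 2 3}eA in mf f0 *.
apply: ge0_integral_bigcup => //.
- by move=> k; apply: measurableI.
- apply/trivIsetP => i j _ _ ij; apply/seteqP; split => // t [[_ /= ->] [_ /= e]].
  by move: ij; rewrite e eqxx.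
Qed.

End Decomp.

Lemma natmeas_comp d (T : measurableType d) d' (U : measurableType d')
  (X : T -> nat) (h : nat -> U) (D : set T) :
  natmeas X -> measurable_fun D (fun x => h (X x)).
Proof. by move=> mX mD Y mY; apply: measurableI => //; exact: (mX (h @^-1` Y)). Qed.

Section Indep.
Local Open Scope ereal_scope.
Context d (T : measurableType d) (R : realType) (P : probability T R).

Lemma indep_integral (B : set T) (X X0 : T -> nat) (g : nat -> R) :
  measurable B -> natmeas X -> natmeas X0 -> (forall j, (0 <= g j)%R) ->
  (forall j, P (B `&` X @^-1` [set j]) = P B * P (X0 @^-1` [set j])) ->
  \int[P]_(x in B) (g (X x))%:E = P B * \int[P]_x (g (X0 x))%:E.
Proof.
move=> mB mX mX0 g0 ind.
rewrite (integral_natdecomp _ mB mX); last 2 first.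
- exact: (@natmeas_comp _ _ _ _ X (fun j => (g j)%:E) B mX).
- by move=> x _; rewrite lee_fin.
rewrite (integral_natdecomp _ measurableT mX0); last 2 first.
- exact: (@natmeas_comp _ _ _ _ X0 (fun j => (g j)%:E) setT mX0).
- by move=> x _; rewrite lee_fin.
have e1 (A : set T) (Y : T -> nat) j : measurable A -> natmeas Y ->
    \int[P]_(x in A `&` Y @^-1` [set j]) (g (Y x))%:E =
    (g j)%:E * P (A `&` Y @^-1` [set j]).
  move=> mA mY.
  have mAY : measurable (A `&` Y @^-1` [set j]) by apply: measurableI => //; exact: mY.
  rewrite -(@integral_cst _ _ _ P _ mAY).
  by apply: eq_integral => x /[!inE] -[_ /= ->].
under eq_eseriesr do rewrite e1 // ind.
under [X in _ = _ * X]eq_eseriesr do rewrite e1 // setTI.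
have PB : P B = (fine (P B))%:E by rewrite fineK // fin_num_measure.
rewrite PB -nneseriesZl; last first.
  by move=> i _; rewrite mule_ge0 // lee_fin.
by apply: eq_eseriesr => j _; rewrite muleCA.
Qed.

End Indep.


Lemma in_bigcapS (I : eqType) (T : Type) (s : seq I) (F : I -> set T) t :
  (\big[setI/setT]_(j <- s) F j) t <-> (forall j, j \in s -> F j t).
Proof.
elim: s => [|a s IH]; first by rewrite big_nil; split.
rewrite big_cons; split.
  move=> [Ft /IH H] j; rewrite inE => /orP[/eqP -> //|js]; exact: H.
move=> H; split; first by apply: H; rewrite inE eqxx.
by apply/IH => j js; apply: H; rewrite inE js orbT.
Qed.

Section IndClass.
Local Open Scope ereal_scope.
Context d (T : measurableType d) (R : realType) (P : probability T R).
Variable (xi : nat -> nat -> T -> nat).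
Hypothesis mxi : forall n i, measurable_fun setT (xi n i).
Hypothesis ind : mutually_independent P (fun j : nat * nat => xi j.1 j.2).

Lemma natmeas_xi n i : natmeas (xi n i).
Proof. by move=> Y; rewrite -[X in measurable X]setTI; exact: mxi. Qed.

Definition indclass n : set (set T) := [set B | measurable B /\
  forall i j, P (B `&` xi n i @^-1` [set j]) = P B * P (xi n i @^-1` [set j])].

Lemma finE (A : set T) : measurable A -> P A = (fine (P A))%:E.
Proof. by move=> mA; rewrite fineK // fin_num_measure. Qed.

Lemma indclass_lambda n : lambda_system setT (indclass n).
Proof.
apply/dynkin_lambda_system; split.
- split; first exact: measurableT.
  by move=> i j; rewrite setTI probability_setT mul1e.
- move=> B [mB HB]; split; first exact: measurableC.
  move=> i j; have mE : measurable (xi n i @^-1` [set j]) by exact: natmeas_xi.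
  set E := xi n i @^-1` [set j].
  have e1 : P (~` B `&` E) = P E - P (E `&` B).
    rewrite setIC -setDE; apply: measureD => //.
    by rewrite (le_lt_trans (probability_le1 _ mE)) // ltry.
  have e2 : P (~` B) = 1 - P B by exact: probability_setC.
  have e3 : P (E `&` B) = P B * P E by rewrite setIC; exact: HB.
  rewrite e1 e2 e3 (finE mB) (finE mE).
  by rewrite -EFinM -EFinB -EFinB -EFinM; congr EFin; ring.
- move=> F tF HF; split.
    by apply: bigcup_measurable => k _; case: (HF k).
  move=> i j; have mE : measurable (xi n i @^-1` [set j]) by exact: natmeas_xi.
  set E := xi n i @^-1` [set j].
  have e1 : P (\bigcup_k (F k `&` E)) = \sum_(k <oo | k \in setT) P (F k `&` E).
    apply: measure_bigcup.
      by move=> k _; apply: measurableI => //; case: (HF k).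
    apply/trivIsetP => a b _ _ ab; move/trivIsetP: tF => /(_ a b I I ab).
    by move=> e; apply/seteqP; split => // t [[Fa _] [Fb _]]; rewrite -e.
  have e2 : P (\bigcup_k F k) = \sum_(k <oo | k \in setT) P (F k).
    by apply: measure_bigcup => // k _; case: (HF k).
  rewrite setI_bigcupl e1 e2.
  have e3 : forall k, P (F k `&` E) = P (F k) * P E by move=> k; exact: (proj2 (HF k)).
  under eq_eseriesr do rewrite e3.
  rewrite (finE mE) muleC -nneseriesZl; last by move=> k _; exact: measure_ge0.
  by apply: eq_eseriesr => k _; rewrite muleC.
Qed.

Definition Igen n : set (set T) := [set A | exists (s : seq (nat * nat))
  (B : nat * nat -> set nat), [/\ uniq s, all (fun j => (j.1 < n)%N) s &
  A = \big[setI/setT]_(j <- s) (xi j.1 j.2 @^-1` B j)]].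

Lemma Igen_setI n : setI_closed (Igen n).
Proof.
move=> A1 A2 [s1 [B1 [u1 a1 ->]]] [s2 [B2 [u2 a2 ->]]].
exists (undup (s1 ++ s2)).
exists (fun j => (if j \in s1 then B1 j else setT) `&` (if j \in s2 then B2 j else setT)).
split; first exact: undup_uniq.
  apply/allP => j; rewrite mem_undup mem_cat => /orP[js|js].
    by move/allP: a1; apply.
  by move/allP: a2; apply.
apply/seteqP; split => t.
  move=> [/in_bigcapS H1 /in_bigcapS H2]; apply/in_bigcapS => j.
  rewrite mem_undup mem_cat => _ /=.
  split.
    by case: (boolP (j \in s1)) => js //; exact: (H1 j js).
  by case: (boolP (j \in s2)) => js //; exact: (H2 j js).
move/in_bigcapS => H; split; apply/in_bigcapS => j js.
  have /H : j \in undup (s1 ++ s2) by rewrite mem_undup mem_cat js.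
  by rewrite /= js => -[].
have /H : j \in undup (s1 ++ s2) by rewrite mem_undup mem_cat js orbT.
by rewrite /= js => -[].
Qed.

Lemma bigcap_measurable_seq (s : seq (nat * nat)) (B : nat * nat -> set nat) :
  measurable (\big[setI/setT]_(j <- s) (xi j.1 j.2 @^-1` B j)).
Proof.
elim: s => [|a s IH]; first by rewrite big_nil.
by rewrite big_cons; apply: measurableI => //; exact: natmeas_xi.
Qed.

Lemma Igen_indclass n : Igen n `<=` indclass n.
Proof.
move=> A [s [B [us als ->]]]; split; first exact: bigcap_measurable_seq.
move=> i j.
have nis : (n, i) \notin s.
  by apply/negP => /(allP als) /=; rewrite ltnn.
pose B' := fun k => if k == (n, i) then [set j] else B k.
have := ind; rewrite /mutually_independent => /(_ ((n, i) :: s) B'); rewrite /= nis us => /(_ isT).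
rewrite !big_cons /B' eqxx.
have eB : forall (F : nat * nat -> set nat -> set T),
    \big[setI/setT]_(k <- s) F k (if k == (n, i) then [set j] else B k) =
    \big[setI/setT]_(k <- s) F k (B k).
  move=> F; rewrite big_seq_cond [RHS]big_seq_cond; apply: eq_bigr => k.
  by rewrite andbT => ks; case: eqP => // ek; move: nis; rewrite -ek ks.
have eP : \prod_(k <- s) P (xi k.1 k.2 @^-1` (if k == (n, i) then [set j] else B k)) =
          \prod_(k <- s) P (xi k.1 k.2 @^-1` B k).
  rewrite big_seq_cond [RHS]big_seq_cond; apply: eq_bigr => k.
  by rewrite andbT => ks; case: eqP => // ek; move: nis; rewrite -ek ks.
rewrite (eB (fun k Y => xi k.1 k.2 @^-1` Y)) eP => H.
have H2 := ind; rewrite /mutually_independent in H2; have H3 := H2 s B us; rewrite -H3 in H.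
by rewrite setIC muleC; exact: H.
Qed.

End IndClass.


Lemma Z_natmeas_gen d' (M : measurableType d') (zeta : nat -> nat -> M -> nat)
  (Zt : nat -> M -> nat) n : (forall t, Zt 0%N t = 1%N) ->
  (forall k t, Zt k.+1 t = (\sum_(i < Zt k t) zeta k i t)%N) ->
  (forall m i, (m < n)%N -> natmeas (zeta m i)) ->
  forall k, (k <= n)%N -> natmeas (Zt k).
Proof.
move=> Z0 ZS mz; elim => [_|k IH kn].
  by rewrite (_ : Zt 0%N = fun _ => 1%N); [exact: natmeas_cst|apply/funext].
rewrite (_ : Zt k.+1 = fun t => (fun m t => \sum_(i < m) zeta k i t)%N (Zt k t) t).
  apply: (@natmeas_rand _ _ (Zt k) (fun m t => (\sum_(i < m) zeta k i t)%N)).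
    by apply: IH; exact: ltnW.
  by move=> m; apply: natmeas_sum => i; apply: mz.
by apply/funext => t; rewrite ZS.
Qed.

Section GWmeas.
Context d (T : measurableType d) (R : realType) (P : probability T R).
Variables (xi : nat -> nat -> T -> nat) (Z : nat -> T -> nat).
Hypothesis mxi : forall n i, measurable_fun setT (xi n i).
Hypothesis ind : mutually_independent P (fun j : nat * nat => xi j.1 j.2).
Hypothesis GW : GW_process xi Z.

Lemma Z_natmeas k : natmeas (Z k).
Proof.
case: GW => Z0 ZS.
apply: (@Z_natmeas_gen _ T xi Z k Z0 ZS) => // m i _.
exact: (natmeas_xi mxi).
Qed.

Let gM n := g_sigma_algebraType (Igen xi n).

Lemma xi_gM n m i : (m < n)%N -> @natmeas _ (gM n) (xi m i).
Proof.
move=> mn Y; apply: sub_gen_smallest.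
exists [:: (m, i)], (fun _ => Y); split => //=; first by rewrite mn.
by rewrite big_cons big_nil setIT.
Qed.

Lemma Z_gM n k : (k <= n)%N -> @natmeas _ (gM n) (Z k).
Proof.
case: GW => Z0 ZS kn.
apply: (@Z_natmeas_gen _ (gM n) xi Z n Z0 ZS) => // m i mn.
exact: xi_gM.
Qed.

Lemma filtration_Igen n A : natural_filtration Z n A -> <<s Igen xi n >> A.
Proof.
apply: smallest_sub; first exact: smallest_sigma_algebra.
move=> _ [k [kn [B ->]]]; exact: (Z_gM kn B).
Qed.

Lemma filtration_indclass n A k : natural_filtration Z n A ->
  indclass P xi n (A `&` Z n @^-1` [set k]).
Proof.
move=> /filtration_Igen FA.
have H : <<s Igen xi n >> (A `&` Z n @^-1` [set k]).
  have := @measurableI _ (gM n) A (Z n @^-1` [set k]) FA (Z_gM (leqnn n) _).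
  by [].
apply: (lambda_system_subset (@Igen_setI _ _ xi n)
  (indclass_lambda P mxi n) (Igen_indclass mxi ind (n:=n))) => //.
Qed.

Lemma filtration_measurable n A : natural_filtration Z n A -> measurable A.
Proof.
move=> /filtration_Igen FA.
have := lambda_system_subset (@Igen_setI _ _ xi n)
  (indclass_lambda P mxi n) (Igen_indclass mxi ind (n:=n)) (fun _ _ => subsetT _) FA.
by case.
Qed.

End GWmeas.


Section GWstep.
Context d (T : measurableType d) (R : realType) (P : probability T R).
Variables (xi0 : T -> nat) (xi : nat -> nat -> T -> nat) (Z : nat -> T -> nat).
Hypothesis mxi0 : measurable_fun setT xi0.
Hypothesis mxi : forall n i, measurable_fun setT (xi n i).
Hypothesis ind : mutually_independent P (fun j : nat * nat => xi j.1 j.2).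
Hypothesis iddist : forall n i (B : set nat), P (xi n i @^-1` B) = P (xi0 @^-1` B).
Hypothesis GW : GW_process xi Z.
Variables (beta p e0 : R).
Hypotheses (b0 : 0 < beta) (p1 : 1 <= p) (e00 : 0 <= e0).
Hypothesis hE : (\int[P]_x ((xi0 x)%:R `^ p)%:E = e0%:E)%E.
Hypothesis he : beta `^ p * e0 <= 1.

Let X n t := ((Z n t)%:R * beta ^+ n) `^ p.

Let natmeas_xi0 : natmeas xi0.
Proof. by move=> Y; rewrite -[X in measurable X]setTI; exact: mxi0. Qed.

Lemma step n A : natural_filtration Z n A ->
  (\int[P]_(x in A) (X n.+1 x)%:E <= \int[P]_(x in A) (X n x)%:E)%E.
Proof.
move=> FA.
have mA := filtration_measurable mxi ind GW FA.
have mZ := Z_natmeas mxi GW.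
have mX k (D : set T) : measurable_fun D (fun x => (X k x)%:E).
  exact: (@natmeas_comp _ _ _ _ (Z k) (fun j => ((j%:R * beta ^+ k) `^ p)%:E) D (mZ k)).
have p0 : 0 < p by exact: (lt_le_trans ltr01 p1).
have Xge0 k x : (0 <= (X k x)%:E)%E by rewrite lee_fin powR_ge0.
rewrite (integral_natdecomp P mA (mZ n) (mX n.+1 A) (fun x _ => Xge0 n.+1 x)).
rewrite (integral_natdecomp P mA (mZ n) (mX n A) (fun x _ => Xge0 n x)).
apply: lee_nneseries => [k _ _|k _]; first by apply: integral_ge0 => x _; exact: Xge0.
set Bk := A `&` Z n @^-1` [set k].
have [mBk HBk] := filtration_indclass mxi ind GW k FA.
set pb := fine (P Bk).
have Pb : P Bk = pb%:E by rewrite /pb fineK // fin_num_measure.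
have pb0 : 0 <= pb by rewrite -lee_fin -Pb measure_ge0.
have -> : (\int[P]_(x in Bk) (X n x)%:E = ((k%:R * beta ^+ n) `^ p)%:E * P Bk)%E.
  rewrite -integral_cst //; apply: eq_integral => x /[!inE] -[_ /= Zx].
  by rewrite /X Zx.
set cc := (beta ^+ n.+1) `^ p * k%:R `^ (p - 1).
have cc0 : 0 <= cc by rewrite mulr_ge0 ?powR_ge0.
pose f2 x := (cc%:E * \sum_(i < k) (((xi n i x)%:R `^ p)%:E))%E.
have mf2 : measurable_fun Bk f2.
  apply: measurable_funeM; apply: emeasurable_sum => i.
  exact: (@natmeas_comp _ _ _ _ (xi n i) (fun j => ((j%:R `^ p)%:E : \bar R)) Bk
    (natmeas_xi mxi n i)).
apply: (@le_trans _ _ (\int[P]_(x in Bk) f2 x)%E).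
  apply: ge0_le_integral => //.
  move=> x [_ /= Znx]; rewrite /f2 /X.
  case: GW => _ ZS; rewrite ZS Znx sumEFin -EFinM lee_fin.
  rewrite natr_sum powRM; last 2 first.
  - by apply: sumr_ge0 => i _.
  - by rewrite exprn_ge0 // ltW.
  rewrite /cc mulrC -mulrA; apply: ler_wpM2l; first exact: powR_ge0.
  by apply: (@powmean _ p k (fun i => (xi n i x)%:R)) => // i.
have mfs : forall i, measurable_fun Bk (fun x => ((xi n i x)%:R `^ p)%:E : \bar R).
  move=> i; exact: (@natmeas_comp _ _ _ _ (xi n i)
      (fun j => ((j%:R `^ p)%:E : \bar R)) Bk (natmeas_xi mxi n i)).
have f0s : forall i x, Bk x -> (0 <= ((xi n i x)%:R `^ p)%:E :> \bar R)%E.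
  by move=> i x _; rewrite lee_fin powR_ge0.
rewrite /f2 ge0_integralZl_EFin //; last 2 first.
  - by move=> x Bx; apply: sume_ge0 => i _; exact: f0s.
  - by apply: emeasurable_sum => i; exact: mfs.
rewrite (@ge0_integral_sum _ _ _ P Bk mBk _ (fun (i : 'I_k) x => ((xi n i x)%:R `^ p)%:E)
  (fun i => mfs i) (fun i => f0s i)).
have e1 i : (\int[P]_(x in Bk) ((xi n i x)%:R `^ p)%:E = (pb * e0)%:E)%E.
  rewrite (@indep_integral _ _ _ P Bk (xi n i) xi0 (fun j => j%:R `^ p) mBk
    (natmeas_xi mxi n i) natmeas_xi0); last 2 first.
  - by move=> j; exact: powR_ge0.
  - by move=> j; rewrite (HBk i j) iddist.
  by rewrite hE Pb.
under eq_bigr do rewrite e1.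
rewrite sumEFin sumr_const card_ord Pb -!EFinM lee_fin -[(pb * e0) *+ k]mulr_natr /cc.
have bn0 : 0 <= beta ^+ n by rewrite exprn_ge0 // ltW.
have eb : (beta ^+ n.+1) `^ p = (beta ^+ n) `^ p * beta `^ p.
  by rewrite exprSr powRM // ltW.
have ek : (k%:R * beta ^+ n) `^ p = k%:R `^ p * (beta ^+ n) `^ p.
  by rewrite powRM // ler0n.
rewrite eb ek -(mulr_powRB1 (ler0n _ k) p0).
set B1 := (beta ^+ n) `^ p; set b1 := beta `^ p; set K1 := k%:R `^ (p - 1).
have -> : B1 * b1 * K1 * (pb * e0 * k%:R) = (k%:R * K1 * B1 * pb) * (b1 * e0) by ring.
rewrite -[X in _ <= X]mulr1; apply: ler_wpM2l => //.
by rewrite !mulr_ge0 ?powR_ge0 ?ler0n.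
Qed.

End GWstep.


Unset Implicit Arguments. Set Strict Implicit. Set Printing Implicit Defensive.

Theorem lemma6p1 (d : measure_display) (T : measurableType d) (R : realType)
  (P : probability T R) (xi0 : T -> nat) (xi : nat -> nat -> T -> nat)
  (Z : nat -> T -> nat) (mu beta : R) :
  iid_offspring P xi0 xi ->
  GW_process xi Z ->
  (\int[P]_x ((xi0 x)%:R)%:E)%E = mu%:E ->
  mu < 1 ->
  (exists eps : R, 0 < eps /\
     (\int[P]_x (((xi0 x)%:R) `^ (1 + eps))%:E < +oo)%E) ->
  1 < beta -> beta * mu < 1 ->
  exists kappa : R, 0 < kappa /\
    forall delta : R, 0 < delta -> delta < kappa ->
      supermartingale P (natural_filtration Z)
        (fun n t => ((Z n t)%:R * beta ^+ n) `^ (1 + delta)).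
Proof.
move=> [mxi0 [mxi [ind iddist]]] GW hmu mu1 [eps [eps0 hC]] b1 bmu.
have nm0 : natmeas xi0.
  by move=> Y; rewrite -[X in measurable X]setTI; exact: mxi0.
have mu0 : 0 <= mu.
  by rewrite -lee_fin -hmu; apply: integral_ge0 => x _; rewrite lee_fin.
set CE := (\int[P]_x (((xi0 x)%:R) `^ (1 + eps))%:E)%E.
have CE0 : (0 <= CE)%E by apply: integral_ge0 => x _; rewrite lee_fin powR_ge0.
set C := fine CE.
have CEE : CE = C%:E by rewrite /C fineK // ge0_fin_numE.
have C0 : 0 <= C by rewrite -lee_fin -CEE.
have [M [kappa [M0 [k0 [ke H]]]]] := choose_kappa mu0 C0 b1 bmu eps0.
exists kappa; split => // delta d0 dk.
have de : delta < eps by lra.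
set p := 1 + delta.
have p1 : 1 <= p by rewrite /p; lra.
have b0 : 0 < beta by lra.
set E0 := (\int[P]_x ((xi0 x)%:R `^ p)%:E)%E.
have E00 : (0 <= E0)%E by apply: integral_ge0 => x _; rewrite lee_fin powR_ge0.
set bound := M `^ delta * mu + M `^ (delta - eps) * C.
have E0b : (E0 <= bound%:E)%E.
  set RHS := (\int[P]_x ((M `^ delta)%:E * ((xi0 x)%:R)%:E +
      (M `^ (delta - eps))%:E * (((xi0 x)%:R) `^ (1 + eps))%:E))%E.
  have I1 : (E0 <= RHS)%E.
    apply: ge0_le_integral => //.
    - exact: (@natmeas_comp _ _ _ _ xi0 (fun j => ((j%:R `^ p)%:E : \bar R)) setT nm0).
    - exact: (@natmeas_comp _ _ _ _ xi0 (fun j => ((M `^ delta)%:E * (j%:R)%:E +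
         (M `^ (delta - eps))%:E * ((j%:R) `^ (1 + eps))%:E)%E) setT nm0).
    - move=> x _; rewrite -!EFinM -EFinD lee_fin.
      by apply: split_bound.
  apply: le_trans I1 _; rewrite /RHS.
  rewrite ge0_integralD //; last 4 first.
  - by move=> x _; rewrite -EFinM lee_fin mulr_ge0 ?powR_ge0.
  - exact: (@natmeas_comp _ _ _ _ xi0 (fun j => ((M `^ delta)%:E * (j%:R)%:E)%E) setT nm0).
  - by move=> x _; rewrite -EFinM lee_fin mulr_ge0 ?powR_ge0.
  - exact: (@natmeas_comp _ _ _ _ xi0 (fun j => ((M `^ (delta - eps))%:E *
         ((j%:R) `^ (1 + eps))%:E)%E) setT nm0).
  rewrite ge0_integralZl_EFin //; last 2 first.
  - exact: (@natmeas_comp _ _ _ _ xi0 (fun j => ((j%:R)%:E : \bar R)) setT nm0).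
  - exact: powR_ge0.
  rewrite ge0_integralZl_EFin //; last 2 first.
  - exact: (@natmeas_comp _ _ _ _ xi0 (fun j => (((j%:R) `^ (1 + eps))%:E : \bar R)) setT nm0).
  - exact: powR_ge0.
  by rewrite hmu -/CE CEE -!EFinM -EFinD.
set e0 := fine E0.
have E0e : E0 = e0%:E.
  rewrite /e0 fineK // ge0_fin_numE //; apply: le_lt_trans E0b _; exact: ltry.
have e00 : 0 <= e0 by rewrite -lee_fin -E0e.
have he : beta `^ p * e0 <= 1.
  apply: le_trans (H delta d0 dk).
  apply: ler_wpM2l; first exact: powR_ge0.
  by rewrite -lee_fin -E0e.
have stepn := step mxi0 mxi ind iddist GW b0 p1 E0e he.
have FT n : natural_filtration Z n setT.
  apply: sub_gen_smallest; exists 0%N; split => //; exists setT.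
  by rewrite preimage_setT.
have bnd n : (\int[P]_x (((Z n x)%:R * beta ^+ n) `^ p)%:E <= 1)%E.
  elim: n => [|n IH].
    rewrite (_ : (fun x => _) = cst 1%E); last first.
      apply/funext => x; case: GW => Z0 _.
      by rewrite Z0 expr0 mulr1 powR1.
    by rewrite integral_cst // mul1e; exact: probability_le1.
  exact: le_trans (@stepn n setT (FT n)) IH.
split.
- move=> n B mB; apply: sub_gen_smallest; exists n; split => //.
  by exists ((fun j : nat => (j%:R * beta ^+ n) `^ p) @^-1` B).
split.
- move=> n; apply/integrableP; split.
    exact: (@natmeas_comp _ _ _ _ (Z n) (fun j => ((j%:R * beta ^+ n) `^ p)%:E : \bar R)
      setT (Z_natmeas mxi GW n)).
  rewrite (_ : (fun x => _) = (fun x => (((Z n x)%:R * beta ^+ n) `^ p)%:E)).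
    by apply: le_lt_trans (bnd n) _; exact: ltry.
  by apply/funext => x /=; rewrite ger0_norm // powR_ge0.
- by move=> n A FA; exact: stepn.
Qed.
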